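(* Let $\lambda_1,\lambda_2,\sigma_1,\sigma_2\in\mathbb{C}^*$ and $\eta_1,\eta_2\in\mathbb{C}$. Then $\Omega(\lambda_1,\eta_1,\sigma_1,0)\otimes\Omega(\lambda_2,\eta_2,\sigma_2,0)$ is an irreducible $\mathcal{G}$-module if and only if $\lambda_1\neq\lambda_2$.
   Context: The planar Galilean conformal algebra $\mathcal{G}$ is the complex Lie algebra with basis $\{L_m,H_m,I_m,J_m\mid m\in\mathbb{Z}\}$ and brackets $[L_m,L_n]=(n-m)L_{m+n}$, $[L_m,H_n]=nH_{m+n}$, $[L_m,I_n]=(n-m)I_{m+n}$, $[L_m,J_n]=(n-m)J_{m+n}$, $[H_m,I_n]=I_{m+n}$, $[H_m,J_n]=-J_{m+n}$, and $[H_m,H_n]=[I_m,I_n]=[J_m,J_n]=[I_m,J_n]=0$ for all $m,n\in\mathbb{Z}$. For $\lambda,\sigma\in\mathbb{C}^*$, $\eta\in\mathbb{C}$, the module $\Omega(\lambda,\eta,\sigma,0)$ is $\mathbb{C}[X,Y]$ with $L_m f(X,Y)=\lambda^m(Y-mX+m\eta)f(X,Y-m)$, $H_m f(X,Y)=\lambda^m X f(X,Y-m)$, $I_m f(X,Y)=\lambda^m\sigma f(X-1,Y-m)$, $J_m f(X,Y)=0$. The tensor product of $\mathcal{G}$-modules has action $x(v\otimes w)=xv\otimes w+v\otimes xw$. *)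

(* Defs.v *)
From HB Require Import structures.
From mathcomp Require Import all_boot all_order all_algebra.
From mathcomp Require Import reals.
From mathcomp Require Import complex.
From mathcomp Require Import mpoly.
Set Implicit Arguments. Unset Strict Implicit. Unset Printing Implicit Defensive.
Import Order.TTheory GRing.Theory Num.Theory.
Local Open Scope ring_scope.
Local Open Scope complex_scope.

Section GCA.
Variable R : realType.
Local Notation C := (R[i]).
(* The tensor product C[X1,Y1] (x) C[X2,Y2] identified with C[X1,Y1,X2,Y2]:
   variable 0 = X1, 1 = Y1, 2 = X2, 3 = Y2, and f (x) g = f(X1,Y1) g(X2,Y2). *)
Local Notation V := {mpoly C[4]}.

Definition shift (c : 'I_4 -> C) (F : V) : V :=
  comp_mpoly [tuple 'X_i - (c i)%:MP | i < 4] F.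

Definition sh4 (a b d e : C) : 'I_4 -> C :=
  fun i => nth 0 [:: a; b; d; e] i.

(* Action of the planar Galilean conformal algebra on
   Omega(l1,e1,s1,0) (x) Omega(l2,e2,s2,0), x (v (x) w) = x v (x) w + v (x) x w. *)
Definition tL (l1 e1 l2 e2 : C) (m : int) (F : V) : V :=
  (l1 ^ m) *: (('X_1 - m%:~R *: 'X_0 + (m%:~R * e1)%:MP) * shift (sh4 0 m%:~R 0 0) F)
  + (l2 ^ m) *: (('X_3 - m%:~R *: 'X_2 + (m%:~R * e2)%:MP) * shift (sh4 0 0 0 m%:~R) F).

Definition tH (l1 l2 : C) (m : int) (F : V) : V :=
  (l1 ^ m) *: ('X_0 * shift (sh4 0 m%:~R 0 0) F)
  + (l2 ^ m) *: ('X_2 * shift (sh4 0 0 0 m%:~R) F).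

Definition tI (l1 s1 l2 s2 : C) (m : int) (F : V) : V :=
  (l1 ^ m * s1) *: shift (sh4 1 m%:~R 0 0) F
  + (l2 ^ m * s2) *: shift (sh4 0 0 1 m%:~R) F.

Definition tJ (m : int) (F : V) : V := 0.

Definition is_submodule (l1 e1 s1 l2 e2 s2 : C) (S : V -> Prop) : Prop :=
  [/\ S 0,
      (forall u v, S u -> S v -> S (u + v)),
      (forall (c : C) u, S u -> S (c *: u)) &
      (forall (m : int) u, S u ->
         [/\ S (tL l1 e1 l2 e2 m u), S (tH l1 l2 m u),
             S (tI l1 s1 l2 s2 m u) & S (tJ m u)])].

Definition tensor_irreducible (l1 e1 s1 l2 e2 s2 : C) : Prop :=
  (exists v : V, v != 0) /\
  forall S : V -> Prop, is_submodule l1 e1 s1 l2 e2 s2 S ->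
    (forall v, S v -> v = 0) \/ (forall v, S v).

End GCA.

(* Main.v *)
Require Import Defs.
From mathcomp Require Import all_boot all_order all_algebra.
From mathcomp Require Import reals complex.
From mathcomp Require Import mpoly.
From Stdlib Require Import Classical.
Set Implicit Arguments. Unset Strict Implicit. Unset Printing Implicit Defensive.
Import Order.TTheory GRing.Theory Num.Theory.
Local Open Scope ring_scope.

Section PSeq.
Variables (K : numFieldType) (V : lmodType K).

Definition psum (a : nat -> V) N (m : nat) : V :=
  \sum_(k < N) ((m%:R : K) ^+ k) *: a k.
Definition pseq N (f : nat -> V) := exists a, forall m, f m = psum a N m.
Definition bco (a : nat -> V) N (j : nat) : V :=
  \sum_(k < N.+1 | (j < k)%N) ('C(k, j))%:R *: a k.

Lemma delta_psum a N m :
  psum a N.+1 m.+1 - psum a N.+1 m = psum (bco a N) N m.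
Proof.
rewrite /psum /bco -sumrB.
have E : forall k : 'I_N.+1, ((m.+1%:R : K) ^+ k) *: a k - ((m%:R : K) ^+ k) *: a k
   = \sum_(i < N | (i < k)%N) (((m%:R : K) ^+ i) *+ 'C(k, i)) *: a k.
  move=> k; rewrite -scalerBl mulrS addrC exprD1n big_ord_recr /= binn mulr1n.
  rewrite addrK scaler_suml.
  by rewrite (big_ord_widen N (fun i => ((m%:R : K) ^+ i *+ 'C(k, i)) *: a k)) // -ltnS.
rewrite (eq_bigr _ (fun k _ => E k)).
under [RHS]eq_bigr => j _ do rewrite scaler_sumr.
rewrite (exchange_big_dep (fun _ => true)) //=.
apply: eq_bigr => i _; apply: eq_bigr => k _.
by rewrite scalerA mulr_natr.
Qed.


Lemma subrACA (a b c d : V) : a - b - (c - d) = (a - c) - (b - d).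
Proof. by rewrite !opprB addrACA [RHS]addrACA [- c - b]addrC. Qed.

Lemma bco_last a N : bco a N.+1 N = N.+1%:R *: a N.+1.
Proof.
rewrite /bco (big_pred1 ord_max) /= ?binSn //.
move=> k; rewrite /= -val_eqE /=; case: k => k /=; rewrite ltnS => hk.
by rewrite eqn_leq hk.
Qed.

Lemma psum_recr a N m : psum a N.+1 m = psum a N m + ((m%:R : K) ^+ N) *: a N.
Proof. by rewrite /psum big_ord_recr. Qed.

Variable S : V -> Prop.
Hypotheses (S0 : S 0) (SD : forall u v, S u -> S v -> S (u + v))
  (SZ : forall (c : K) u, S u -> S (c *: u)).

Lemma SB u v : S u -> S v -> S (u - v).
Proof. by move=> hu hv; apply: SD => //; rewrite -scaleN1r; apply: SZ. Qed.

Lemma extract N : forall a, (forall m, S (psum a N m)) -> forall k, (k < N)%N -> S (a k).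
Proof.
elim: N => [//|N IH] a Ha.
have HaN : S (a N).
  case: N IH Ha => [|n] IH Ha.
    by have := Ha 0%N; rewrite /psum big_ord1 expr0 scale1r.
  have Hd : forall m, S (psum (bco a n.+1) n.+1 m).
    by move=> m; rewrite -delta_psum; apply: SB.
  have := IH _ Hd n (ltnSn n); rewrite bco_last => H.
  have := SZ (n.+1%:R)^-1 H; rewrite scalerA mulVf ?scale1r //.
  by rewrite pnatr_eq0.
have Hb : forall m, S (psum a N m).
  move=> m; have := Ha m; rewrite psum_recr => H.
  by have := SB H (SZ ((m%:R : K) ^+ N) HaN); rewrite addrK.
move=> k; rewrite ltnS leq_eqVlt => /orP [/eqP -> //|hk].
exact: IH.
Qed.

Lemma pseq0 f : pseq 0 f -> forall m, f m = 0.
Proof. by case=> a Ha m; rewrite Ha /psum big_ord0. Qed.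

Lemma pseq_delta N f : pseq N.+1 f -> pseq N (fun m => f m.+1 - f m).
Proof. by case=> a Ha; exists (bco a N) => m; rewrite !Ha delta_psum. Qed.

Lemma pseq_widen N f : pseq N f -> pseq N.+1 f.
Proof.
case=> a Ha; exists (fun k => if k == N then 0 else a k) => m.
rewrite psum_recr eqxx scaler0 addr0 Ha /psum; apply: eq_bigr => k _.
by rewrite ifN // neq_ltn ltn_ord.
Qed.

Lemma pseq_add N f g : pseq N f -> pseq N g -> pseq N (fun m => f m + g m).
Proof.
case=> a Ha [b Hb]; exists (fun k => a k + b k) => m.
by rewrite Ha Hb /psum -big_split /=; apply: eq_bigr => k _; rewrite scalerDr.
Qed.

Lemma pseq_sub N f g : pseq N f -> pseq N g -> pseq N (fun m => f m - g m).
Proof.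
case=> a Ha [b Hb]; exists (fun k => a k - b k) => m.
by rewrite Ha Hb /psum -sumrB /=; apply: eq_bigr => k _; rewrite scalerBr.
Qed.

Lemma pseq_scale N (c : K) f : pseq N f -> pseq N (fun m => c *: f m).
Proof.
case=> a Ha; exists (fun k => c *: a k) => m.
rewrite Ha /psum scaler_sumr; apply: eq_bigr => k _.
by rewrite !scalerA mulrC.
Qed.

Lemma pseq_lin N (phi : {linear V -> V}) f : pseq N f -> pseq N (fun m => phi (f m)).
Proof.
case=> a Ha; exists (fun k => phi (a k)) => m.
by rewrite Ha /psum linear_sum; apply: eq_bigr => k _; rewrite linearZ.
Qed.

Lemma pseq_mulm N f : pseq N f -> pseq N.+1 (fun m => (m%:R : K) *: f m).
Proof.
case=> a Ha; exists (fun k => if k is k'.+1 then a k' else 0) => m.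
rewrite Ha /psum big_ord_recl scaler0 add0r scaler_sumr; apply: eq_bigr => k _.
by rewrite scalerA exprS.
Qed.

Lemma psumD a b N m : psum (fun k => a k + b k) N m = psum a N m + psum b N m.
Proof. by rewrite /psum -big_split; apply: eq_bigr => k _; rewrite scalerDr. Qed.

Lemma pseq_shift N f : pseq N f -> pseq N (fun m => f m.+1).
Proof.
case: N => [|N] h.
  by exists (fun _ => 0) => m; rewrite (pseq0 h) /psum big_ord0.
have [b Hb] := pseq_widen (pseq_delta h).
have [a Ha] := h.
exists (fun k => a k + b k) => m.
by rewrite psumD -Ha -Hb addrC subrK.
Qed.

Section Sep.
Variables (l1 l2 : K).
Hypotheses (l12 : l1 != l2) (l1n0 : l1 != 0).

Lemma sep_aux N : forall f, pseq N f ->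
  (forall m, S (l1 *: f m.+1 - l2 *: f m)) -> forall m, S (f m).
Proof.
elim: N => [|N IH] f hf Hf m.
  by rewrite (pseq0 hf).
have hd := pseq_delta hf.
have Hd : forall m, S (f m.+1 - f m).
  apply: IH hd _ => k.
  have := SB (Hf k.+1) (Hf k).
  by congr S; rewrite !scalerBr subrACA.
have := SZ (l1 - l2)^-1 (SB (Hf m) (SZ l1 (Hd m))).
congr S; rewrite [l1 *: (_ - _)]scalerBr subrACA subrr sub0r opprB -scalerBl scalerA.
by rewrite mulVf ?scale1r // subr_eq0.
Qed.

Lemma sep Ng : forall Nf f g, pseq Nf f -> pseq Ng g ->
  (forall m, S (l1 ^+ m *: f m + l2 ^+ m *: g m)) -> forall m, S (f m).
Proof.
elim: Ng => [|Ng IH] Nf f g hf hg H m.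
  have := SZ (l1 ^+ m)^-1 (H m); rewrite (pseq0 hg) scaler0 addr0 scalerA.
  by rewrite mulVf ?scale1r // expf_neq0.
apply: (sep_aux hf) => {m} m.
pose fs k := l1 *: f k.+1 - l2 *: f k.
pose gs k := l2 *: (g k.+1 - g k).
have hfs : pseq Nf fs.
  exact/pseq_sub/(pseq_scale _ hf)/pseq_scale/pseq_shift.
have hgs : pseq Ng gs by exact/pseq_scale/pseq_delta.
apply: (IH _ _ gs hfs hgs) => k.
have := SB (H k.+1) (SZ l2 (H k)).
congr S; rewrite /fs /gs scalerDr !scalerBr !scalerA !exprS opprD addrACA.
by rewrite !(mulrC l2) !(mulrC l1).
Qed.
End Sep.
End PSeq.

Lemma mmap_ext n (R0 S0 : nzRingType) (f f' : R0 -> S0) (h h' : 'I_n -> S0) p :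
  f =1 f' -> h =1 h' -> mmap f h p = mmap f' h' p.
Proof.
move=> Hf Hh; rewrite /mmap; apply: eq_bigr => m _; rewrite Hf /mmap1.
by congr (_ * _); apply: eq_bigr => i _; rewrite Hh.
Qed.

Lemma mmap_rmorph n (R0 : nzRingType) (S0 T0 : nzRingType) (f : R0 -> S0)
  (h : 'I_n -> S0) (phi : {rmorphism S0 -> T0}) p :
  phi (mmap f h p) = mmap (phi \o f) (phi \o h) p.
Proof.
rewrite /mmap rmorph_sum; apply: eq_bigr => m _; rewrite rmorphM /mmap1 rmorph_prod.
by congr (_ * _); apply: eq_bigr => i _; rewrite rmorphXn.
Qed.

Section Shift.
Variable R : realType.
Local Notation C := (R[i]).
Local Notation V := {mpoly C[4]}.

Lemma shiftE (c : 'I_4 -> C) (F : V) :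
  shift c F = mmap (@mpolyC 4 C) (fun j => 'X_j - (c j)%:MP) F.
Proof. by rewrite /shift /comp_mpoly; apply: mmap_ext => // j; rewrite tnth_mktuple. Qed.

Lemma shift_ext c c' (F : V) : c =1 c' -> shift c F = shift c' F.
Proof. by move=> H; rewrite !shiftE; apply: mmap_ext => // j; rewrite H. Qed.

Lemma shiftD c (F G : V) : shift c (F + G) = shift c F + shift c G.
Proof. exact: comp_mpolyD. Qed.
Lemma shiftB c (F G : V) : shift c (F - G) = shift c F - shift c G.
Proof. exact: comp_mpolyB. Qed.
Lemma shiftM c (F G : V) : shift c (F * G) = shift c F * shift c G.
Proof. exact: rmorphM. Qed.
Lemma shiftZ c a (F : V) : shift c (a *: F) = a *: shift c F.
Proof. exact: comp_mpolyZ. Qed.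
Lemma shiftC c a : shift c (a%:MP : V) = a%:MP.
Proof. exact: comp_mpolyC. Qed.
Lemma shift1 c : shift c (1 : V) = 1.
Proof. exact: comp_mpoly1. Qed.
Lemma shift0 c : shift c (0 : V) = 0.
Proof. exact: comp_mpoly0. Qed.
Lemma shiftX c j : shift c ('X_j : V) = 'X_j - (c j)%:MP.
Proof. by rewrite /shift comp_mpolyXU -tnth_nth tnth_mktuple. Qed.

Lemma shift_id (F : V) : shift (fun _ => 0) F = F.
Proof.
rewrite shiftE -[RHS](comp_mpoly_id F) /comp_mpoly; apply: mmap_ext => // j.
by rewrite tnth_mktuple subr0.
Qed.

Lemma shift_comp c d (F : V) : shift c (shift d F) = shift (fun j => c j + d j) F.
Proof.
rewrite [shift d F]shiftE [shift c (mmap _ _ _)]/shift.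
rewrite (mmap_rmorph _ _ (comp_mpoly [tuple 'X_i - (c i)%:MP | i < 4])) shiftE.
apply: mmap_ext => [x|j] /=; first exact: comp_mpolyC.
rewrite comp_mpolyB comp_mpolyC comp_mpolyXU -tnth_nth tnth_mktuple.
by rewrite rmorphD opprD addrA.
Qed.

Definition TTf : C -> {poly V} := (@polyC V) \o (@mpolyC 4 C).
Definition TTh (c d : 'I_4 -> C) (j : 'I_4) : {poly V} :=
  ('X_j - (c j)%:MP)%:P - ((d j)%:MP)%:P * 'X.
Definition TT (c d : 'I_4 -> C) (u : V) : {poly V} := mmap TTf (TTh c d) u.

Lemma TTD c d u v : TT c d (u + v) = TT c d u + TT c d v.
Proof. exact: mmapD. Qed.
Lemma TTM c d u v : TT c d (u * v) = TT c d u * TT c d v.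
Proof. exact: (mmap_is_multiplicative _ _).1. Qed.
Lemma TTC c d a : TT c d a%:MP = (a%:MP)%:P.
Proof. exact: mmapC. Qed.
Lemma TTZ c d a u : TT c d (a *: u) = (a%:MP)%:P * TT c d u.
Proof. exact: mmapZ. Qed.
Lemma TTX c d j : TT c d 'X_j = TTh c d j.
Proof. by rewrite /TT mmapX mmap1U. Qed.

Lemma TT_eval c d u x : (TT c d u).[x%:MP] = shift (fun j => c j + x * d j) u.
Proof.
rewrite -horner_evalE /TT (mmap_rmorph _ _ (horner_eval x%:MP)) shiftE.
apply: mmap_ext => [y|j] /=; rewrite horner_evalE /TTf /TTh /= ?hornerC //.
rewrite hornerD hornerN !hornerC hornerM hornerC hornerX -rmorphM.
by rewrite rmorphD opprD addrA [x * _]mulrC.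
Qed.

Section Coef.
Variable d : 'I_4 -> C.
Local Notation T := (TT (fun _ => 0) d).
Definition Dd (u : V) : V := \sum_(j < 4) d j *: u^`M(j).
Definition G (u : V) := (T u)`_0 = u /\ (T u)`_1 = - Dd u.

Lemma DdD u v : Dd (u + v) = Dd u + Dd v.
Proof. by rewrite /Dd -big_split; apply: eq_bigr => j _; rewrite mderivD scalerDr. Qed.
Lemma DdZ a u : Dd (a *: u) = a *: Dd u.
Proof.
by rewrite /Dd scaler_sumr; apply: eq_bigr => j _; rewrite mderivZ !scalerA mulrC.
Qed.
Lemma DdM u v : Dd (u * v) = Dd u * v + u * Dd v.
Proof.
rewrite /Dd mulr_suml mulr_sumr -big_split; apply: eq_bigr => j _.
by rewrite mderivM scalerDr scalerAl scalerAr.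
Qed.
Lemma DdC a : Dd a%:MP = 0.
Proof. by rewrite /Dd big1 // => j _; rewrite mderivC scaler0. Qed.

Lemma GD u v : G u -> G v -> G (u + v).
Proof.
move=> [h0 h1] [k0 k1]; rewrite /G TTD !coefD; split; first exact: (congr2 +%R h0 k0).
by rewrite DdD opprD; exact: (congr2 +%R h1 k1).
Qed.
Lemma GZ a u : G u -> G (a *: u).
Proof.
move=> [h0 h1]; rewrite /G TTZ !coefCM !mul_mpolyC; split; first exact: (congr1 _ h0).
by rewrite DdZ -scalerN; exact: (congr1 _ h1).
Qed.
Lemma GM u v : G u -> G v -> G (u * v).
Proof.
move=> [h0 h1] [k0 k1]; rewrite /G TTM !coefM; split.
  by rewrite big_ord1; exact: (congr2 *%R h0 k0).
rewrite big_ord_recr big_ord1 /= subn0 subnn.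
transitivity (u * - Dd v + - Dd u * v).
  exact: (congr2 +%R (congr2 *%R h0 k1) (congr2 *%R h1 k0)).
by rewrite DdM mulrN mulNr opprD addrC.
Qed.
Lemma GC a : G a%:MP.
Proof. by rewrite /G TTC !coefC /= DdC oppr0. Qed.
Lemma GX j : G 'X_j.
Proof.
rewrite /G TTX /TTh !coefB !coefC !coefCM !coefX /= mulr0 subr0 rmorph0 subr0.
split=> //; rewrite mulr1 sub0r; congr (- _).
rewrite /Dd (bigD1 j) //= big1 ?addr0.
  rewrite mderivX mnm1E eqxx.
  have -> : (U_(j) - U_(j) = 0)%MM by apply/mnmP => k; rewrite mnmBE subnn mnm0E.
  by rewrite mpolyX0 scale1r -alg_mpolyC.
move=> k hk; rewrite mderivX mnm1E.
by rewrite eq_sym (negbTE hk) scale0r scaler0.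
Qed.

Lemma Gall u : G u.
Proof.
elim/mpolyind: u => [|c m p _ _ Gp].
  by rewrite -(rmorph0 (@mpolyC 4 C)); apply: GC.
apply: GD Gp; apply: GZ; rewrite mpolyXE_id.
apply: (big_ind G); [by rewrite -(rmorph1 (@mpolyC 4 C)); apply: GC | exact: GM|].
move=> i _; elim: (m i) => [|k IH]; first by rewrite expr0 -(rmorph1 (@mpolyC 4 C)); apply: GC.
by rewrite exprS; apply: GM IH; apply: GX.
Qed.
End Coef.
End Shift.

Section Main.
Variable R : realType.
Local Notation C := (R[i]).
Local Notation V := {mpoly C[4]}.

Lemma TT_psum (c d : 'I_4 -> C) (u : V) (m : nat) :
  shift (fun j => c j + m%:R * d j) u =
  psum (fun k => (TT c d u)`_k) (size (TT c d u)) m.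
Proof.
rewrite -TT_eval horner_coef /psum; apply: eq_bigr => k _.
by rewrite -rmorphXn mulrC mul_mpolyC.
Qed.

Lemma shift_pseq (c d : 'I_4 -> C) (u : V) :
  exists N, pseq N (fun m => shift (fun j => c j + m%:R * d j) u).
Proof. by exists (size (TT c d u)); exists (fun k => (TT c d u)`_k) => m; apply: TT_psum. Qed.

Section Closed.
Variable S : V -> Prop.
Hypotheses (S0 : S 0) (SD : forall u v, S u -> S v -> S (u + v))
  (SZ : forall (c : C) u, S u -> S (c *: u)).

Lemma deriv_closed (d : 'I_4 -> C) (u : V) :
  (forall m, S (shift (fun j => m%:R * d j) u)) -> S (Dd d u).
Proof.
move=> H.
pose a k := (TT (fun _ => 0) d u)`_k.
pose N := size (TT (fun _ => 0) d u).
have E : a 1%N = - Dd d u := proj2 (Gall d u).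
have H' : forall m, S (psum a N m).
  move=> m; have := H m.
  rewrite (@shift_ext _ _ (fun j => 0 + m%:R * d j)); last by move=> j; rewrite add0r.
  by rewrite TT_psum.
case: (ltnP 1 N) => hs.
  have := SZ (-1) (eq_ind _ S (extract SD SZ H' hs) _ E).
  by rewrite scaleN1r opprK.
suff -> : Dd d u = 0 by [].
apply/eqP; rewrite -oppr_eq0; apply/eqP; rewrite -E.
exact: nth_default.
Qed.
End Closed.

Lemma pseq_ext N (f g : nat -> V) : (forall m, f m = g m) -> pseq N f -> pseq N g.
Proof. by move=> E [a Ha]; exists a => m; rewrite -E Ha. Qed.

Lemma pseq_mull N (a : V) (f : nat -> V) : pseq N f -> pseq N (fun m => a * f m).
Proof.
case=> b Hb; exists (fun k => a * b k) => m.
by rewrite Hb /psum mulr_sumr; apply: eq_bigr => k _; rewrite scalerAr.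
Qed.

End Main.

Section Main.
Variable R : realType.
Local Notation C := (R[i]).
Local Notation V := {mpoly C[4]}.
Definition o0 : 'I_4 := @Ordinal 4 0 isT.
Definition o1 : 'I_4 := @Ordinal 4 1 isT.
Definition o2 : 'I_4 := @Ordinal 4 2 isT.
Definition o3 : 'I_4 := @Ordinal 4 3 isT.

Lemma sum4 (W : zmodType) (F : 'I_4 -> W) :
  \sum_(j < 4) F j = F o0 + F o1 + F o2 + F o3.
Proof.
rewrite !big_ord_recl big_ord0 addr0 !addrA.
by congr (F _ + F _ + F _ + F _); apply: val_inj.
Qed.

Lemma Dd_sh4 (a b c d : C) (u : V) :
  Dd (sh4 a b c d) u = a *: u^`M(o0) + b *: u^`M(o1) + c *: u^`M(o2) + d *: u^`M(o3).
Proof. by rewrite /Dd sum4. Qed.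

Lemma shift_zero (u : V) : shift (sh4 0 0 0 0) u = u.
Proof.
rewrite -[RHS]shift_id; apply: shift_ext => -[[|[|[|[|k]]]] hk] //.
Qed.

Section Abs.
Variables (W : lmodType C).
Lemma L1000 (x0 x1 x2 x3 : W) : 1 *: x0 + 0 *: x1 + 0 *: x2 + 0 *: x3 = x0.
Proof. by rewrite scale1r !scale0r !addr0. Qed.
Lemma L1100 (x0 x1 x2 x3 : W) : 1 *: x0 + 1 *: x1 + 0 *: x2 + 0 *: x3 = x0 + x1.
Proof. by rewrite !scale1r !scale0r !addr0. Qed.
Lemma L0010 (x0 x1 x2 x3 : W) : 0 *: x0 + 0 *: x1 + 1 *: x2 + 0 *: x3 = x2.
Proof. by rewrite scale1r !scale0r !addr0 !add0r. Qed.
Lemma L0011 (x0 x1 x2 x3 : W) : 0 *: x0 + 0 *: x1 + 1 *: x2 + 1 *: x3 = x2 + x3.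
Proof. by rewrite !scale1r !scale0r !add0r. Qed.
Lemma Lsub (x y : W) : x + y - x = y.
Proof. by rewrite addrAC subrr add0r. Qed.
End Abs.

Lemma top_const (u : V) : u != 0 -> exists2 c : C, c != 0 & mderivm (mlead u) u = c%:MP.
Proof.
move=> u0; set m := mlead u.
exists (u@_m *+ \prod_(i < 4) (m i)^_(m i)).
  rewrite mulrn_eq0 negb_or mleadc_eq0 u0 andbT -lt0n.
  by apply: prodn_gt0 => i; rewrite ffactnn fact_gt0.
apply/mpolyP => m'; rewrite mcoeff_mderivm mcoeffC.
case: (eqVneq m' 0%MM) => [->|nz]; first by rewrite addm0 mulr1.
rewrite mulr0 memN_msupp_eq0 ?mul0rn //.
apply: msize_mdeg_ge; rewrite -mlead_deg // mdegD -/m -addn1 leq_add2l lt0n mdeg_eq0.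
done.
Qed.

Section Irr.
Variables (l1 l2 s1 s2 e1 e2 : C).
Hypotheses (l1n0 : l1 != 0) (l2n0 : l2 != 0) (s1n0 : s1 != 0) (s2n0 : s2 != 0)
  (l12 : l1 != l2).
Variable S : V -> Prop.
Hypotheses (S0 : S 0) (SD : forall u v, S u -> S v -> S (u + v))
  (SZ : forall (c : C) u, S u -> S (c *: u))
  (SL : forall (m : int) u, S u -> S (tL l1 e1 l2 e2 m u))
  (SH : forall (m : int) u, S u -> S (tH l1 l2 m u))
  (SI : forall (m : int) u, S u -> S (tI l1 s1 l2 s2 m u)).

Let l21 : l2 != l1. Proof. by rewrite eq_sym. Qed.

Lemma SZinv (c : C) u : c != 0 -> S (c *: u) -> S u.
Proof. by move=> c0 /(SZ c^-1); rewrite scalerA mulVf ?scale1r. Qed.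

Lemma natz (m : nat) : ((m%:Z)%:~R : C) = m%:R.
Proof. by []. Qed.

Lemma stepI u : S u -> forall m : nat,
  S (shift (sh4 1 m%:R 0 0) u) /\ S (shift (sh4 0 0 1 m%:R) u).
Proof.
move=> Su.
have [N1 p1] := shift_pseq (sh4 1 0 0 0) (sh4 0 1 0 0) u.
have [N2 p2] := shift_pseq (sh4 0 0 1 0) (sh4 0 0 0 1) u.
have E1 m : shift (fun j => sh4 1 0 0 0 j + m%:R * sh4 0 1 0 0 j) u = shift (sh4 1 m%:R 0 0) u.
  by apply: shift_ext => -[[|[|[|[|k]]]] hk] //=; rewrite ?mulr0 ?mulr1 ?addr0 ?add0r.
have E2 m : shift (fun j => sh4 0 0 1 0 j + m%:R * sh4 0 0 0 1 j) u = shift (sh4 0 0 1 m%:R) u.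
  by apply: shift_ext => -[[|[|[|[|k]]]] hk] //=; rewrite ?mulr0 ?mulr1 ?addr0 ?add0r.
have q1 := pseq_scale s1 (pseq_ext E1 p1).
have q2 := pseq_scale s2 (pseq_ext E2 p2).
have H m : S (l1 ^+ m *: (s1 *: shift (sh4 1 m%:R 0 0) u)
            + l2 ^+ m *: (s2 *: shift (sh4 0 0 1 m%:R) u)).
  by have := SI (m%:Z) Su; rewrite /tI !scalerA.
move=> m; split.
  exact: (SZinv s1n0 (sep S0 SD SZ l12 l1n0 q1 q2 H m)).
apply: (SZinv s2n0 (sep S0 SD SZ l21 l2n0 q2 q1 _ m)) => k.
by rewrite addrC; apply: H.
Qed.


Lemma stepH u : S u -> S ('X_o0 * u) /\ S ('X_o2 * u).
Proof.
move=> Su.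
have [N1 p1] := shift_pseq (sh4 0 0 0 0) (sh4 0 1 0 0) u.
have [N2 p2] := shift_pseq (sh4 0 0 0 0) (sh4 0 0 0 1) u.
have E1 m : shift (fun j => sh4 0 0 0 0 j + m%:R * sh4 0 1 0 0 j) u = shift (sh4 0 m%:R 0 0) u.
  by apply: shift_ext => -[[|[|[|[|k]]]] hk] //=; rewrite ?mulr0 ?mulr1 ?addr0 ?add0r.
have E2 m : shift (fun j => sh4 0 0 0 0 j + m%:R * sh4 0 0 0 1 j) u = shift (sh4 0 0 0 m%:R) u.
  by apply: shift_ext => -[[|[|[|[|k]]]] hk] //=; rewrite ?mulr0 ?mulr1 ?addr0 ?add0r.
have q1 := pseq_mull 'X_o0 (pseq_ext E1 p1).
have q2 := pseq_mull 'X_o2 (pseq_ext E2 p2).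
have H m : S (l1 ^+ m *: ('X_o0 * shift (sh4 0 m%:R 0 0) u)
            + l2 ^+ m *: ('X_o2 * shift (sh4 0 0 0 m%:R) u)).
  by have := SH (m%:Z) Su.
split.
  by have := sep S0 SD SZ l12 l1n0 q1 q2 H 0; rewrite shift_zero.
have := sep S0 SD SZ l21 l2n0 q2 q1 _ 0; rewrite shift_zero; apply=> k.
by rewrite addrC; apply: H.
Qed.

Lemma Lform (e : C) (a b g : V) (m : nat) :
  (b - m%:R *: a + (m%:R * e)%:MP) * g = b * g + (m%:R : C) *: ((e%:MP - a) * g).
Proof.
rewrite scalerAl scalerBr -[(m%:R : C) *: e%:MP]mul_mpolyC -rmorphM -mulrDl.
by congr (_ * _); rewrite addrA addrAC.
Qed.

Lemma stepL u : S u -> S ('X_o1 * u) /\ S ('X_o3 * u).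
Proof.
move=> Su.
have [N1 p1] := shift_pseq (sh4 0 0 0 0) (sh4 0 1 0 0) u.
have [N2 p2] := shift_pseq (sh4 0 0 0 0) (sh4 0 0 0 1) u.
have E1 m : shift (fun j => sh4 0 0 0 0 j + m%:R * sh4 0 1 0 0 j) u = shift (sh4 0 m%:R 0 0) u.
  by apply: shift_ext => -[[|[|[|[|k]]]] hk] //=; rewrite ?mulr0 ?mulr1 ?addr0 ?add0r.
have E2 m : shift (fun j => sh4 0 0 0 0 j + m%:R * sh4 0 0 0 1 j) u = shift (sh4 0 0 0 m%:R) u.
  by apply: shift_ext => -[[|[|[|[|k]]]] hk] //=; rewrite ?mulr0 ?mulr1 ?addr0 ?add0r.
have r1 := pseq_ext E1 p1.
have r2 := pseq_ext E2 p2.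
have q1 := pseq_ext (fun m => esym (Lform e1 'X_o0 'X_o1 _ m))
  (pseq_add (pseq_widen (pseq_mull 'X_o1 r1)) (pseq_mulm (pseq_mull (e1%:MP - 'X_o0) r1))).
have q2 := pseq_ext (fun m => esym (Lform e2 'X_o2 'X_o3 _ m))
  (pseq_add (pseq_widen (pseq_mull 'X_o3 r2)) (pseq_mulm (pseq_mull (e2%:MP - 'X_o2) r2))).
have H m : S (l1 ^+ m *: (('X_o1 - m%:R *: 'X_o0 + (m%:R * e1)%:MP) * shift (sh4 0 m%:R 0 0) u)
            + l2 ^+ m *: (('X_o3 - m%:R *: 'X_o2 + (m%:R * e2)%:MP) * shift (sh4 0 0 0 m%:R) u)).
  by have := SL (m%:Z) Su.
have Z (a b : V) e : (b - (0%:R : C) *: a + ((0%:R : C) * e)%:MP) * shift (sh4 0 0 0 0) u = b * u.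
  by rewrite scale0r mul0r rmorph0 subr0 addr0 shift_zero.
split.
  by have := sep S0 SD SZ l12 l1n0 q1 q2 H 0; rewrite Z.
have := sep S0 SD SZ l21 l2n0 q2 q1 _ 0; rewrite Z; apply=> k.
by rewrite addrC; apply: H.
Qed.


Lemma SX j u : S u -> S ('X_j * u).
Proof.
move=> Su; case: j => [[|[|[|[|k]]]] hk].
- by rewrite (_ : Ordinal hk = o0); [exact: (stepH Su).1 | apply: val_inj].
- by rewrite (_ : Ordinal hk = o1); [exact: (stepL Su).1 | apply: val_inj].
- by rewrite (_ : Ordinal hk = o2); [exact: (stepH Su).2 | apply: val_inj].
- by rewrite (_ : Ordinal hk = o3); [exact: (stepL Su).2 | apply: val_inj].
- by [].
Qed.

Lemma Smul q u : S u -> S (q * u).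
Proof.
pose P (q : V) := forall u, S u -> S (q * u).
suff : P q by apply.
elim/mpolyind: q => [|c m p _ _ Hp] u' Su.
  by rewrite mul0r.
rewrite mulrDl -scalerAl; apply: SD (Hp _ Su); apply: SZ.
rewrite mpolyXE_id; move: u' Su; apply: (big_ind P).
- by move=> v Sv; rewrite mul1r.
- by move=> x y Px Py v Sv; rewrite -mulrA; apply/Px/Py.
move=> i _; elim: (m i) => [|k IH] v Sv; first by rewrite expr0 mul1r.
by rewrite exprS -mulrA; apply/SX/IH.
Qed.

Lemma shift_iter (c : 'I_4 -> C) : (forall u, S u -> S (shift c u)) ->
  forall m u, S u -> S (shift (fun j => m%:R * c j) u).
Proof.
move=> Hc; elim=> [|m IH] u Su.
  by rewrite (@shift_ext _ _ (fun _ => 0)) ?shift_id // => j; rewrite mul0r.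
have := Hc _ (IH u Su); rewrite shift_comp => H.
rewrite (@shift_ext _ (fun j => m.+1%:R * c j) (fun j => c j + m%:R * c j)) //.
by move=> j; rewrite mulrSr mulrDl mul1r addrC.
Qed.

Lemma Sder j u : S u -> S (u^`M(j)).
Proof.
have cP1 v : S v -> S (shift (sh4 1 0 0 0) v).
  by move=> Sv; have := (stepI Sv 0).1; rewrite mulr0n.
have cP1S1 v : S v -> S (shift (sh4 1 1 0 0) v).
  by move=> Sv; have := (stepI Sv 1).1; rewrite mulr1n.
have cP2 v : S v -> S (shift (sh4 0 0 1 0) v).
  by move=> Sv; have := (stepI Sv 0).2; rewrite mulr0n.
have cP2S2 v : S v -> S (shift (sh4 0 0 1 1) v).
  by move=> Sv; have := (stepI Sv 1).2; rewrite mulr1n.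
move=> Su.
have D0 := deriv_closed S0 SD SZ (fun m => shift_iter cP1 m Su).
have D01 := deriv_closed S0 SD SZ (fun m => shift_iter cP1S1 m Su).
have D2 := deriv_closed S0 SD SZ (fun m => shift_iter cP2 m Su).
have D23 := deriv_closed S0 SD SZ (fun m => shift_iter cP2S2 m Su).
rewrite Dd_sh4 L1000 in D0.
rewrite Dd_sh4 L1100 in D01.
rewrite Dd_sh4 L0010 in D2.
rewrite Dd_sh4 L0011 in D23.
case: j => [[|[|[|[|k]]]] hk].
- by rewrite (_ : Ordinal hk = o0); [exact: D0 | apply: val_inj].
- rewrite (_ : Ordinal hk = o1); last by apply: val_inj.
  by have := SB SD SZ D01 D0; rewrite Lsub.
- by rewrite (_ : Ordinal hk = o2); [exact: D2 | apply: val_inj].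
- rewrite (_ : Ordinal hk = o3); last by apply: val_inj.
  by have := SB SD SZ D23 D2; rewrite Lsub.
- by [].
Qed.

Lemma Sderm m u : S u -> S (mderivm m u).
Proof.
move=> Su; rewrite /mderivm; elim: (enum 'I_4) => //= i s IH.
by elim: (m i) => [|k IHk] //=; apply: Sder.
Qed.

Lemma Sall v : S v -> v != 0 -> forall w, S w.
Proof.
move=> Sv v0.
have [c c0 E] := top_const v0.
have S1 : S 1.
  have := Sderm (mlead v) Sv; rewrite E -alg_mpolyC.
  exact: SZinv c0.
by move=> w; rewrite -(mulr1 w); apply: Smul.
Qed.

End Irr.


End Main.

Section Red.
Variable R : realType.
Local Notation C := (R[i]).
Local Notation V := {mpoly C[4]}.

Definition Sred (F : V) := forall t : C, shift (sh4 0 t 0 (- t)) F = F.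

Lemma shift_commute (c d : 'I_4 -> C) (F : V) : shift c (shift d F) = shift d (shift c F).
Proof. by rewrite !shift_comp; apply: shift_ext => j; rewrite addrC. Qed.

Lemma Sred_shift c F : Sred F -> Sred (shift c F).
Proof. by move=> H t; rewrite shift_commute H. Qed.

Lemma Sred_key (m : C) F : Sred F -> shift (sh4 0 m 0 0) F = shift (sh4 0 0 0 m) F.
Proof.
move=> H; rewrite -{1}(H (- m)) shift_comp; apply: shift_ext.
by move=> -[[|[|[|[|k]]]] hk] //=; rewrite ?addr0 ?add0r ?opprK ?subrr.
Qed.

Section Abs2.
Variable W : lalgType C.
Lemma Lcancel (a : C) (A1 A2 G t : W) :
  a *: ((A1 - t) * G) + a *: ((A2 + t) * G) = a *: (A1 * G) + a *: (A2 * G).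
Proof.
by rewrite mulrBl mulrDl scalerBr scalerDr addrACA addNr addr0.
Qed.
Lemma L4 (x y z t : W) : x - t - y + z = x - y + z - t.
Proof. by rewrite [x - t - y]addrAC (addrAC (x - y) (- t) z). Qed.
Lemma L5 (x y z t : W) : x + t - y + z = x - y + z + t.
Proof. by rewrite [x + t - y]addrAC (addrAC (x - y) t z). Qed.
End Abs2.

Lemma shiftA1 (t a e : C) :
  shift (sh4 0 t 0 (- t)) ('X_1 - a *: 'X_0 + (a * e)%:MP : V) =
  ('X_1 - a *: 'X_0 + (a * e)%:MP) - t%:MP.
Proof.
rewrite shiftD shiftB shiftZ shiftC !shiftX /= rmorph0 subr0.
by rewrite (_ : sh4 0 t 0 (- t) 1 = t) // L4.
Qed.


Lemma shiftA2 (t a e : C) :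
  shift (sh4 0 t 0 (- t)) ('X_3 - a *: 'X_2 + (a * e)%:MP : V) =
  ('X_3 - a *: 'X_2 + (a * e)%:MP) + t%:MP.
Proof.
rewrite shiftD shiftB shiftZ shiftC !shiftX.
rewrite (_ : sh4 0 t 0 (- t) 3 = - t) // (_ : sh4 0 t 0 (- t) 2 = 0) //.
by rewrite rmorph0 subr0 rmorphN opprK L5.
Qed.

Lemma shiftZe (c : 'I_4 -> C) (a : C) (m : int) (F : V) :
  shift c ((a ^ m) *: F) = (a ^ m) *: shift c F.
Proof. exact: comp_mpolyZ. Qed.

Lemma shiftZe2 (c : 'I_4 -> C) (a s : C) (m : int) (F : V) :
  shift c ((a ^ m * s) *: F) = (a ^ m * s) *: shift c F.
Proof. exact: comp_mpolyZ. Qed.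

Section AbsT.
Variable T : V -> V.
Hypotheses (TD : forall x y, T (x + y) = T x + T y) (TM : forall x y, T (x * y) = T x * T y)
  (TZ : forall (a : C) (m : int) x, T ((a ^ m) *: x) = (a ^ m) *: T x)
  (TZ2 : forall (a s : C) (m : int) x, T ((a ^ m * s) *: x) = (a ^ m * s) *: T x).

Lemma red_tL (a : C) (m : int) (A1 A2 F1 F2 t : V) :
  T A1 = A1 - t -> T A2 = A2 + t -> T F1 = F1 -> T F2 = F2 -> F1 = F2 ->
  T (a ^ m *: (A1 * F1) + a ^ m *: (A2 * F2)) = a ^ m *: (A1 * F1) + a ^ m *: (A2 * F2).
Proof.
move=> h1 h2 h3 h4 h5; rewrite TD !TZ !TM h1 h2 h3 h4 -h5.
by rewrite mulrBl mulrDl scalerBr scalerDr addrACA addNr addr0.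
Qed.

Lemma red_tH (a b : C) (m : int) (A1 A2 F1 F2 : V) :
  T A1 = A1 -> T A2 = A2 -> T F1 = F1 -> T F2 = F2 ->
  T (a ^ m *: (A1 * F1) + b ^ m *: (A2 * F2)) = a ^ m *: (A1 * F1) + b ^ m *: (A2 * F2).
Proof. by move=> h1 h2 h3 h4; rewrite TD !TZ !TM h1 h2 h3 h4. Qed.

Lemma red_tI (a b s1 s2 : C) (m : int) (F1 F2 : V) :
  T F1 = F1 -> T F2 = F2 ->
  T ((a ^ m * s1) *: F1 + (b ^ m * s2) *: F2) = (a ^ m * s1) *: F1 + (b ^ m * s2) *: F2.
Proof. by move=> h3 h4; rewrite TD !TZ2 h3 h4. Qed.
End AbsT.

Lemma Sred_sub (l e1 e2 s1 s2 : C) : is_submodule l e1 s1 l e2 s2 Sred.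
Proof.
split.
- by move=> t; exact: shift0.
- by move=> u v Hu Hv t; rewrite shiftD Hu Hv.
- by move=> c u Hu t; rewrite shiftZ Hu.
move=> m u Hu; split => t.
- apply: (red_tL (@shiftD _ _) (@shiftM _ _) (@shiftZe _)).
  + exact: shiftA1.
  + exact: shiftA2.
  + exact: (Sred_shift _ Hu).
  + exact: (Sred_shift _ Hu).
  + exact: (Sred_key _ Hu).
- apply: (red_tH (@shiftD _ _) (@shiftM _ _) (@shiftZe _)).
  + by rewrite shiftX (_ : sh4 0 t 0 (- t) 0 = 0) // rmorph0 subr0.
  + by rewrite shiftX (_ : sh4 0 t 0 (- t) 2 = 0) // rmorph0 subr0.
  + exact: (Sred_shift _ Hu).
  + exact: (Sred_shift _ Hu).
- apply: (red_tI (@shiftD _ _) (@shiftZe2 _)).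
  + exact: (Sred_shift _ Hu).
  + exact: (Sred_shift _ Hu).
- by rewrite /tJ shift0.
Qed.

Lemma Sred1 : Sred 1.
Proof. by move=> t; rewrite shift1. Qed.

Lemma SredX1 : ~ Sred 'X_1.
Proof.
move=> /(_ 1); rewrite shiftX (_ : sh4 0 1 0 (- 1) 1 = 1) // rmorph1.
move/eqP; rewrite subr_eq addrC -subr_eq subrr eq_sym oner_eq0 //.
Qed.

End Red.

Theorem theorem4p5 (R : realType) (l1 l2 s1 s2 e1 e2 : R[i]) :
  l1 != 0 -> l2 != 0 -> s1 != 0 -> s2 != 0 ->
  tensor_irreducible l1 e1 s1 l2 e2 s2 <-> l1 != l2.
Proof.
move=> l1n0 l2n0 s1n0 s2n0; split.
  case=> _ H; apply/negP => /eqP E; subst l2.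
  case: (H _ (Sred_sub l1 e1 e2 s1 s2)) => [H0 | Hall].
    by have := H0 _ (@Sred1 R); apply/eqP; rewrite oner_eq0.
  exact: (@SredX1 R (Hall _)).
move=> l12; split; first by exists 1; rewrite oner_eq0.
move=> S [S0 SD SZ Sop].
have SL m u : S u -> S (tL l1 e1 l2 e2 m u) by move=> Su; case: (Sop m u Su).
have SH m u : S u -> S (tH l1 l2 m u) by move=> Su; case: (Sop m u Su).
have SI m u : S u -> S (tI l1 s1 l2 s2 m u) by move=> Su; case: (Sop m u Su).
case: (classic (exists v, S v /\ v != 0)) => [[v [Sv v0]] | N].
  right; exact: (Sall l1n0 l2n0 s1n0 s2n0 l12 S0 SD SZ SL SH SI Sv v0).
left => v Sv; apply/eqP; case: (eqVneq v 0) => // v0.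
by exfalso; apply: N; exists v.
Qed.
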